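(* Let $M\in\mathbb R^{\mathbb N\times\mathbb N}$ belong to the Jaffard class $\mathcal J(d,\gamma,C)$ and be elliptic, i.e., there is $C_{\rm ell}>0$ with $Mx\cdot x\ge C_{\rm ell}\|x\|_{\ell_2}^2$ for all $x\in\ell_2$. Then $M$ has an $LU$-factorization $M=LU$ with $L$ lower triangular ($L_{ij}=0$ for $i<j$) and $U$ upper triangular ($U_{ij}=0$ for $i>j$) such that the entrywise moduli $|L|,|U|,|L^{-1}|,|U^{-1}|:\ell_2\to\ell_2$ are bounded operators.
   Context: Jaffard class: for a metric $d:\mathbb N\times\mathbb N\to[0,\infty)$ with $\sup_{i\in\mathbb N}\sum_{j\in\mathbb N}\exp(-\varepsilon d(i,j))<\infty$ for every $\varepsilon>0$, and $\gamma>0$, a matrix $M$ belongs to $\mathcal J(d,\gamma,C)$ if for every $0<\gamma'<\gamma$ there exists $C(\gamma')>0$ with $|M_{ij}|\le C(\gamma')\exp(-\gamma' d(i,j))$ for all $i,j$. *)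

(* Defs.v *)
From Stdlib Require Import Reals.
From Coquelicot Require Import Coquelicot.
Open Scope R_scope.

Definition mat := nat -> nat -> R.
Definition vec := nat -> R.

Definition is_metric (d : nat -> nat -> R) : Prop :=
  (forall i j, 0 <= d i j) /\
  (forall i j, d i j = 0 <-> i = j) /\
  (forall i j, d i j = d j i) /\
  (forall i j k, d i k <= d i j + d j k).

Definition summable_metric (d : nat -> nat -> R) : Prop :=
  forall eps, 0 < eps ->
    exists K, forall i,
      ex_series (fun j => exp (- eps * d i j)) /\
      Series (fun j => exp (- eps * d i j)) <= K.

Definition jaffard (d : nat -> nat -> R) (gamma : R) (M : mat) : Prop :=
  forall gamma', 0 < gamma' < gamma ->
    exists C, 0 < C /\
      forall i j, Rabs (M i j) <= C * exp (- gamma' * d i j).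

Definition in_l2 (x : vec) : Prop := ex_series (fun j => x j ^ 2).
Definition l2norm2 (x : vec) : R := Series (fun j => x j ^ 2).

Definition mat_app (M : mat) (x : vec) : vec :=
  fun i => Series (fun j => M i j * x j).

Definition elliptic (M : mat) (c : R) : Prop :=
  forall x, in_l2 x ->
    Series (fun i => mat_app M x i * x i) >= c * l2norm2 x.

Definition bounded_l2 (A : mat) : Prop :=
  exists C, forall x, in_l2 x ->
    (forall i, ex_series (fun j => A i j * x j)) /\
    in_l2 (mat_app A x) /\
    l2norm2 (mat_app A x) <= C * l2norm2 x.

Definition absm (A : mat) : mat := fun i j => Rabs (A i j).

Definition matmul (A B : mat) : mat := fun i j => Series (fun k => A i k * B k j).

Definition idm : mat := fun i j => if Nat.eqb i j then 1 else 0.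

Definition lower_tri (L : mat) : Prop := forall i j, (i < j)%nat -> L i j = 0.
Definition upper_tri (U : mat) : Prop := forall i j, (j < i)%nat -> U i j = 0.

Definition is_inverse (A Ainv : mat) : Prop :=
  (forall i j, matmul A Ainv i j = idm i j) /\
  (forall i j, matmul Ainv A i j = idm i j).

(* Main.v *)
Require Import Defs.
From Stdlib Require Import Reals.
From Coquelicot Require Import Coquelicot.
From Stdlib Require Import Lra Lia Psatz.
Open Scope R_scope.


Fixpoint fsum (n : nat) (f : nat -> R) : R :=
  match n with O => 0 | S n' => fsum n' f + f n' end.

Lemma fsum_ext n f g : (forall k, (k < n)%nat -> f k = g k) -> fsum n f = fsum n g.
Proof. induction n; simpl; intros H; auto. rewrite IHn by (intros; apply H; lia). rewrite H by lia. auto. Qed.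

Lemma fsum_plus n f g : fsum n (fun k => f k + g k) = fsum n f + fsum n g.
Proof. induction n; simpl; [lra|]. rewrite IHn; lra. Qed.

Lemma fsum_scal n c f : fsum n (fun k => c * f k) = c * fsum n f.
Proof. induction n; simpl; [lra|]. rewrite IHn; lra. Qed.

Lemma fsum_scal_r n c f : fsum n (fun k => f k * c) = fsum n f * c.
Proof. induction n; simpl; [lra|]. rewrite IHn; lra. Qed.

Lemma fsum_zero n f : (forall k, (k < n)%nat -> f k = 0) -> fsum n f = 0.
Proof. intros H; rewrite (fsum_ext n f (fun _ => 0)) by auto. clear H. induction n; simpl; lra. Qed.

Lemma fsum_le n f g : (forall k, (k < n)%nat -> f k <= g k) -> fsum n f <= fsum n g.
Proof. induction n; simpl; intros H; [lra|]. specialize (IHn (fun k Hk => H k ltac:(lia))). specialize (H n ltac:(lia)). lra. Qed.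

Lemma fsum_nonneg n f : (forall k, (k < n)%nat -> 0 <= f k) -> 0 <= fsum n f.
Proof. intros H. rewrite <- (fsum_zero n (fun _ => 0)) by auto. apply fsum_le; auto. Qed.

Lemma fsum_abs n f : Rabs (fsum n f) <= fsum n (fun k => Rabs (f k)).
Proof. induction n; simpl. rewrite Rabs_R0; lra. eapply Rle_trans; [apply Rabs_triang|]. lra. Qed.

Lemma fsum_swap n m f : fsum n (fun i => fsum m (fun j => f i j)) = fsum m (fun j => fsum n (fun i => f i j)).
Proof. induction n; simpl. rewrite fsum_zero; auto. rewrite IHn. rewrite <- fsum_plus. auto. Qed.

Lemma fsum_trunc n m f : (m <= n)%nat -> (forall k, (m <= k)%nat -> (k < n)%nat -> f k = 0) -> fsum n f = fsum m f.
Proof. intros Hmn H. induction n. replace m with 0%nat by lia; auto.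
 destruct (Nat.eq_dec m (S n)). subst; auto. simpl. rewrite IHn by (try lia; intros; apply H; lia). rewrite (H n) by lia. lra. Qed.

Lemma fsum_mono_n n m f : (m <= n)%nat -> (forall k, 0 <= f k) -> fsum m f <= fsum n f.
Proof. intros H Hf. induction H; simpl; auto. lra. specialize (Hf m0). lra. Qed.

Lemma fsum_delta n m a : fsum n (fun k => if Nat.eqb k m then a k else 0) = if Nat.ltb m n then a m else 0.
Proof. induction n; simpl; auto. rewrite IHn. destruct (Nat.eqb_spec n m); destruct (Nat.ltb_spec m n); destruct (Nat.ltb_spec m (S n)); subst; try lia; lra. Qed.

Lemma sum_n_fsum a N : sum_n a N = fsum (S N) a.
Proof. induction N. rewrite sum_O. simpl; lra. rewrite sum_Sn, IHN. simpl. reflexivity. Qed.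

Lemma is_series_fin n a : (forall k, (n <= k)%nat -> a k = 0) -> is_series a (fsum n a).
Proof. intros H. change (is_lim_seq (sum_n a) (fsum n a)).
 apply is_lim_seq_ext_loc with (u := fun _ => fsum n a); [|apply is_lim_seq_const].
 exists n. intros N HN. rewrite sum_n_fsum. symmetry. apply fsum_trunc; [lia|]. intros; apply H; lia. Qed.

Lemma Series_fin n a : (forall k, (n <= k)%nat -> a k = 0) -> Series a = fsum n a.
Proof. intros H. apply is_series_unique, is_series_fin; auto. Qed.

Lemma ex_series_fin n a : (forall k, (n <= k)%nat -> a k = 0) -> ex_series a.
Proof. intros H. eexists; apply is_series_fin; eauto. Qed.

Lemma Series_nonneg a : (forall k, 0 <= a k) -> ex_series a -> 0 <= Series a.
Proof. intros Hp He. assert (H0 : Series (fun _ => 0) = 0) by (apply (Series_fin 0); auto).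
 rewrite <- H0. apply Series_le; auto. intros; split; auto; lra. Qed.

Lemma fsum_le_Series n a : (forall k, 0 <= a k) -> ex_series a -> fsum n a <= Series a.
Proof. intros Hp He. destruct n. simpl. apply Series_nonneg; auto.
   rewrite (Series_incr_n a (S n)) by (auto; lia). simpl pred.
   rewrite <- sum_n_Reals, sum_n_fsum.
   assert (0 <= Series (fun k => a (S n + k)%nat)). { apply Series_nonneg. auto.
     apply (ex_series_incr_n a (S n)) in He. auto. } lra. Qed.

Lemma bounded_series a B : (forall k, 0 <= a k) -> (forall n, fsum n a <= B) -> ex_series a /\ Series a <= B.
Proof. intros Hp HB.
 assert (Hinc : forall n, sum_n a n <= sum_n a (S n)). { intros; rewrite !sum_n_fsum. simpl. specialize (Hp (S n)). lra. }
 destruct (ex_finite_lim_seq_incr (sum_n a) B Hinc) as [l Hl]. { intros; rewrite sum_n_fsum; auto. }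
 assert (Hs : is_series a l) by exact Hl.
 split. exists l; auto. rewrite (is_series_unique a l Hs).
 assert (HH := is_lim_seq_le (sum_n a) (fun _ => B) l B). simpl in HH. apply HH; auto.
 intros; rewrite sum_n_fsum; auto. apply is_lim_seq_const. Qed.

Definition dl (k m : nat) : R := if Nat.eqb k m then 1 else 0.

Lemma fsum_dl_r n m f : fsum n (fun k => f k * dl k m) = if Nat.ltb m n then f m else 0.
Proof. rewrite <- fsum_delta. apply fsum_ext; intros k _. unfold dl. destruct (Nat.eqb k m); lra. Qed.

Lemma fsum_dl_l n m f : fsum n (fun k => dl m k * f k) = if Nat.ltb m n then f m else 0.
Proof. rewrite <- fsum_delta. apply fsum_ext; intros k _. unfold dl. destruct (Nat.eqb_spec m k); destruct (Nat.eqb_spec k m); subst; try lia; lra. Qed.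

Fixpoint sch (M : mat) (k : nat) : mat :=
  match k with O => M | S k => fun i j => sch M k i j - sch M k i k * sch M k k j / sch M k k k end.

Definition Lmat (M : mat) : mat := fun i j =>
  if Nat.ltb i j then 0 else if Nat.eqb i j then 1 else sch M j i j / sch M j j j.
Definition Umat (M : mat) : mat := fun i j => if Nat.ltb j i then 0 else sch M i i j.

Lemma tele M k i j : (k <= i)%nat -> (k <= j)%nat ->
  M i j = fsum k (fun l => Lmat M i l * Umat M l j) + sch M k i j.
Proof. induction k; intros Hi Hj. simpl; lra.
 rewrite IHk by lia. simpl fsum. unfold Lmat, Umat.
 destruct (Nat.ltb_spec i k); [lia|]. destruct (Nat.eqb_spec i k); [lia|].
 destruct (Nat.ltb_spec j k); [lia|]. simpl sch. unfold Rdiv. ring. Qed.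

Definition QF (A : mat) (n : nat) (x : vec) : R := fsum n (fun i => fsum n (fun j => A i j * x j) * x i).
Definition EllS (A : mat) (k : nat) (c : R) : Prop :=
  forall n x, (forall l, (l < k)%nat -> x l = 0) -> QF A n x >= c * fsum n (fun i => x i ^ 2).

Lemma pivot_ge A k c : EllS A k c -> A k k >= c.
Proof. intros H. specialize (H (S k) (fun l => dl l k)).
 assert (Hx : forall l, (l < k)%nat -> dl l k = 0). { intros; unfold dl. destruct (Nat.eqb_spec l k); [lia|auto]. }
 specialize (H Hx). unfold QF in H.
 rewrite (fsum_ext _ _ (fun i => A i k * dl i k)) in H.
 2:{ intros i _. rewrite fsum_dl_r. destruct (Nat.ltb_spec k (S k)); [auto|lia]. }
 rewrite fsum_dl_r in H. rewrite (fsum_ext _ _ (fun i => 1 * dl i k)) in H.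
 2:{ intros i _. unfold dl. destruct (Nat.eqb i k); lra. }
 rewrite fsum_dl_r in H. destruct (Nat.ltb_spec k (S k)); [|lia]. lra. Qed.

Lemma sch_step_ell A k c : 0 < c -> EllS A k c ->
  EllS (fun i j => A i j - A i k * A k j / A k k) (S k) c.
Proof. intros Hc H n x Hx. pose proof (pivot_ge A k c H) as Ha.
 destruct (Compare_dec.le_lt_dec n k) as [Hn|Hn].
 - unfold QF. rewrite fsum_zero. rewrite fsum_zero. lra. intros; rewrite Hx by lia; lra.
   intros i Hi. rewrite Hx by lia. lra.
 - set (a := A k k). set (b := fsum n (fun j => A k j * x j)). set (c' := fsum n (fun i => A i k * x i)).
   set (t := - b / a). set (x' := fun l => x l + t * dl l k).
   assert (Hx' : forall l, (l < k)%nat -> x' l = 0). { intros l Hl. unfold x', dl. rewrite Hx by lia.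
     destruct (Nat.eqb_spec l k); [lia|lra]. }
   specialize (H n x' Hx').
   assert (Hin : forall i, fsum n (fun j => A i j * x' j) = fsum n (fun j => A i j * x j) + t * A i k).
   { intros i. unfold x'. rewrite (fsum_ext _ _ (fun j => A i j * x j + t * (A i j * dl j k))) by (intros; ring).
     rewrite fsum_plus, fsum_scal, fsum_dl_r. destruct (Nat.ltb_spec k n); [auto|lia]. }
   assert (HQ : QF A n x' = QF A n x + t * c' + t * b + t * t * a).
   { unfold QF. rewrite (fsum_ext _ _ (fun i => fsum n (fun j => A i j * x j) * x i + t * (A i k * x i)
        + t * (dl k i * fsum n (fun j => A i j * x j)) + t * t * (dl k i * A i k))).
     2:{ intros i _. rewrite Hin. unfold x'. unfold dl. destruct (Nat.eqb_spec i k); destruct (Nat.eqb_spec k i); subst; try lia; ring. }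
     rewrite !fsum_plus, !fsum_scal, !fsum_dl_l. destruct (Nat.ltb_spec k n); [|lia]. fold b. fold c'. unfold a. ring. }
   assert (HS : QF (fun i j => A i j - A i k * A k j / a) n x = QF A n x - c' * b / a).
   { unfold QF. cbv beta. rewrite (fsum_ext _ _ (fun i => fsum n (fun j => A i j * x j) * x i - (b / a) * (A i k * x i))).
     2:{ intros i _. rewrite (fsum_ext _ _ (fun j => A i j * x j + (- (A i k / a)) * (A k j * x j))) by (intros; unfold Rdiv; ring).
       rewrite fsum_plus, fsum_scal. fold b. unfold a, Rdiv. ring. }
     rewrite (fsum_ext n (fun i => fsum n (fun j => A i j * x j) * x i - b / a * (A i k * x i)) (fun i => fsum n (fun j => A i j * x j) * x i + (- (b/a)) * (A i k * x i))) by (intros; ring).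
     rewrite fsum_plus, fsum_scal. fold c'. unfold Rdiv. ring. }
   assert (Hsq : fsum n (fun i => x i ^ 2) <= fsum n (fun i => x' i ^ 2)).
   { apply fsum_le. intros l _. unfold x', dl. destruct (Nat.eqb_spec l k). subst. rewrite Hx by lia. nra. nra. }
   assert (Heq : QF A n x' = QF (fun i j => A i j - A i k * A k j / a) n x).
   { rewrite HQ, HS. unfold t. field. unfold a; lra. }
   rewrite <- Heq. nra. Qed.

Lemma sch_ell M c : 0 < c -> EllS M 0 c -> forall k, EllS (sch M k) k c.
Proof. intros Hc H0 k. induction k; auto. simpl. apply sch_step_ell; auto. Qed.

Lemma LU_lower M : lower_tri (Lmat M).
Proof. intros i j H. unfold Lmat. destruct (Nat.ltb_spec i j); [auto|lia]. Qed.
Lemma LU_upper M : upper_tri (Umat M).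
Proof. intros i j H. unfold Umat. destruct (Nat.ltb_spec j i); [auto|lia]. Qed.
Lemma Lmat_diag M i : Lmat M i i = 1.
Proof. unfold Lmat. rewrite Nat.ltb_irrefl, Nat.eqb_refl. auto. Qed.
Lemma Umat_diag M i : Umat M i i = sch M i i i.
Proof. unfold Umat. rewrite Nat.ltb_irrefl. auto. Qed.

Lemma matmul_fin A B i j n : (forall l, (n <= l)%nat -> A i l * B l j = 0) ->
  matmul A B i j = fsum n (fun l => A i l * B l j).
Proof. intros H; unfold matmul; apply Series_fin; auto. Qed.

Lemma LU_correct M c : 0 < c -> EllS M 0 c -> forall i j, M i j = matmul (Lmat M) (Umat M) i j.
Proof. intros Hc H0 i j. destruct (Compare_dec.le_lt_dec i j) as [Hij|Hij].
 - rewrite (matmul_fin _ _ _ _ (S i)). simpl. rewrite (tele M i i j) by lia. rewrite Lmat_diag.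
   unfold Umat. destruct (Nat.ltb_spec j i); [lia|]. lra.
   intros l Hl. rewrite LU_lower by lia. lra.
 - rewrite (matmul_fin _ _ _ _ (S j)). simpl. rewrite (tele M j i j) by lia. rewrite Umat_diag.
   assert (HL : Lmat M i j = sch M j i j / sch M j j j) by (unfold Lmat; destruct (Nat.ltb_spec i j); [lia|]; destruct (Nat.eqb_spec i j); [lia|]; auto). rewrite HL. clear HL. destruct (Nat.ltb_spec i j); [lia|]. destruct (Nat.eqb_spec i j); [lia|].
   pose proof (pivot_ge _ _ _ (sch_ell M c Hc H0 j)). field. lra.
   intros l Hl. rewrite LU_upper by lia. lra. Qed.

Definition rstep (T P : mat) (i : nat) : vec := fun j => (idm i j - fsum i (fun l => T i l * P l j)) / T i i.
Fixpoint rr (T : mat) (n : nat) : mat :=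
  match n with O => fun _ _ => 0
  | S n' => fun k j => if Nat.eqb k n' then rstep T (rr T n') n' j else rr T n' k j end.
Definition rinv (T : mat) : mat := fun i j => rr T (S i) i j.

Lemma rr_eq T n k j : (k < n)%nat -> rr T n k j = rinv T k j.
Proof. induction n; intros H; [lia|]. simpl. destruct (Nat.eqb_spec k n). subst. unfold rinv. simpl. rewrite Nat.eqb_refl. auto.
 apply IHn; lia. Qed.

Lemma rinv_eq T i j : T i i <> 0 -> rinv T i j * T i i + fsum i (fun l => T i l * rinv T l j) = idm i j.
Proof. intros H. unfold rinv at 1. simpl. rewrite Nat.eqb_refl. unfold rstep.
 rewrite (fsum_ext i (fun l => T i l * rr T i l j) (fun l => T i l * rinv T l j)) by (intros; rewrite rr_eq; auto).
 field. auto. Qed.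

Lemma idm_dl i j : idm i j = dl i j.
Proof. reflexivity. Qed.

Lemma rinv_lower T : (forall i, T i i <> 0) -> lower_tri (rinv T).
Proof. intros Hd i. induction i as [i IH] using (well_founded_induction Wf_nat.lt_wf). intros j Hij.
 pose proof (rinv_eq T i j (Hd i)) as E. rewrite fsum_zero in E.
 2:{ intros l Hl. rewrite (IH l Hl j) by lia. ring. }
 unfold idm in E. destruct (Nat.eqb_spec i j); [lia|]. specialize (Hd i).
 rewrite Rplus_0_r in E. apply Rmult_integral in E. destruct E; auto. lra. Qed.

Lemma rinv_diag T i : (forall i, T i i <> 0) -> rinv T i i = / T i i.
Proof. intros Hd. pose proof (rinv_eq T i i (Hd i)) as E. rewrite fsum_zero in E.
 2:{ intros l Hl. rewrite (rinv_lower T Hd l i) by lia. ring. }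
 unfold idm in E. rewrite Nat.eqb_refl in E. specialize (Hd i). field_simplify_eq; auto. lra. Qed.

Lemma rinv_right T : lower_tri T -> (forall i, T i i <> 0) -> forall i j, matmul T (rinv T) i j = idm i j.
Proof. intros Hl Hd i j. rewrite (matmul_fin _ _ _ _ (S i)). simpl. rewrite <- (rinv_eq T i j (Hd i)). ring.
 intros l H. rewrite Hl by lia. ring. Qed.

Lemma lower_cancel T X Y : lower_tri T -> lower_tri X -> lower_tri Y ->
  (forall i j, matmul T X i j = idm i j) -> (forall i j, matmul X Y i j = idm i j) ->
  forall i j, T i j = Y i j.
Proof. intros HT HX HY E1 E2 i j.
 assert (A1 : T i j = fsum (S i) (fun l => T i l * idm l j)).
 { rewrite (fsum_ext _ _ (fun l => T i l * dl l j)) by auto. rewrite fsum_dl_r.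
   destruct (Nat.ltb_spec j (S i)); auto; try (apply HT; lia). }
 rewrite A1. rewrite (fsum_ext _ _ (fun l => fsum (S i) (fun m => T i l * (X l m * Y m j)))).
 2:{ intros l Hl. rewrite <- E2. rewrite (matmul_fin _ _ _ _ (S i)). rewrite fsum_scal; auto.
     intros m Hm. rewrite HX by lia. ring. }
 rewrite fsum_swap.
 rewrite (fsum_ext _ _ (fun m => idm i m * Y m j)).
 2:{ intros m Hm. rewrite <- E1. rewrite (matmul_fin _ _ _ _ (S i)). rewrite <- fsum_scal_r.
     apply fsum_ext; intros; ring. intros l Hl. rewrite HT by lia. ring. }
 rewrite (fsum_ext _ _ (fun m => dl i m * Y m j)) by auto. rewrite fsum_dl_l.
 destruct (Nat.ltb_spec i (S i)); [auto|lia]. Qed.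

Lemma lower_inverse T : lower_tri T -> (forall i, T i i <> 0) ->
  lower_tri (rinv T) /\ is_inverse T (rinv T) /\ (forall i, rinv T i i = / T i i).
Proof. intros HT Hd.
 assert (HX := rinv_lower T Hd). assert (HXd := fun i => rinv_diag T i Hd).
 assert (HXd' : forall i, rinv T i i <> 0). { intros i. rewrite HXd. apply Rinv_neq_0_compat; auto. }
 assert (HY := rinv_lower _ HXd').
 assert (E := lower_cancel T (rinv T) (rinv (rinv T)) HT HX HY (rinv_right T HT Hd) (rinv_right _ HX HXd')).
 split; auto. split; auto. split. apply rinv_right; auto.
 intros i j. rewrite <- (rinv_right _ HX HXd' i j). unfold matmul. apply Series_ext. intros; rewrite E; auto. Qed.

Definition trans (A : mat) : mat := fun i j => A j i.

Lemma upper_inverse U : upper_tri U -> (forall i, U i i <> 0) ->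
  upper_tri (trans (rinv (trans U))) /\ is_inverse U (trans (rinv (trans U))).
Proof. intros HU Hd.
 assert (HT : lower_tri (trans U)) by (intros i j H; apply HU; lia).
 destruct (lower_inverse (trans U) HT Hd) as [HX [[E1 E2] _]].
 split. intros i j H; apply HX; lia.
 assert (Hs : forall i j, idm i j = idm j i) by (intros; unfold idm; rewrite Nat.eqb_sym; auto).
 split; intros i j; rewrite Hs; [rewrite <- E2|rewrite <- E1]; unfold matmul, trans; apply Series_ext; intros; ring. Qed.

Lemma term_le_fsum n f k : (k < n)%nat -> (forall l, 0 <= f l) -> f k <= fsum n f.
Proof. intros Hk Hf. induction n; [lia|]. simpl. destruct (Nat.eq_dec k n). subst.
 pose proof (fsum_nonneg n f (fun l _ => Hf l)). lra. specialize (IHn ltac:(lia)). specialize (Hf n). lra. Qed.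

Lemma sq_abs x : x ^ 2 = Rabs x ^ 2.
Proof. unfold Rabs; destruct (Rcase_abs x); ring. Qed.

Lemma wd1 A n c f eps m r y :
  0 < c -> (m < n)%nat -> f m = 0 ->
  (forall x, QF (fun i j => A i j * exp (eps * (f i - f j))) n x >= c/2 * fsum n (fun i => x i ^2)) ->
  (forall i, (i < n)%nat -> fsum n (fun k => A i k * y k) = r * idm i m) ->
  forall k, (k < n)%nat -> Rabs (exp (eps * f k) * y k) <= 2 * Rabs r / c.
Proof. intros Hc Hm Hf HQ Hs k Hk.
 set (z := fun l => exp (eps * f l) * y l).
 specialize (HQ z). unfold QF in HQ.
 rewrite (fsum_ext n _ (fun i => exp (eps * f i) * (r * dl i m) * z i)) in HQ.
 2:{ intros i Hi. rewrite <- Hs by auto. rewrite <- fsum_scal. f_equal. apply fsum_ext. intros j _. unfold z.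
     replace (exp (eps * f i)) with (exp (eps * (f i - f j)) * exp (eps * f j)). ring.
     rewrite <- exp_plus. f_equal. ring. }
 rewrite (fsum_ext n _ (fun i => (exp (eps * f i) * r * z i) * dl i m)) in HQ by (intros; ring).
 rewrite fsum_dl_r in HQ. destruct (Nat.ltb_spec m n); [|lia]. rewrite Hf in HQ.
 rewrite Rmult_0_r, exp_0, Rmult_1_l in HQ.
 assert (Hnn : forall l, 0 <= z l ^ 2) by (intros; nra).
 assert (Hzm := term_le_fsum n (fun l => z l ^ 2) m Hm Hnn).
 assert (Hzk := term_le_fsum n (fun l => z l ^ 2) k Hk Hnn). cbv beta in Hzm, Hzk.
 set (S := fsum n (fun i => z i ^ 2)) in *.
 assert (Hrz : r * z m <= Rabs r * Rabs (z m)) by (rewrite <- Rabs_mult; apply Rle_abs).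
 assert (Hzm2 : Rabs (z m) <= 2 * Rabs r / c).
 { assert (z m ^ 2 = Rabs (z m) ^ 2) by apply sq_abs.
   assert (0 <= Rabs (z m)) by apply Rabs_pos. assert (0 <= Rabs r) by apply Rabs_pos.
   assert (Hq : c/2 * Rabs (z m)^2 <= Rabs r * Rabs (z m)).
   { rewrite <- sq_abs. assert (c/2 * z m ^ 2 <= c/2 * S) by (apply Rmult_le_compat_l; lra).  lra. }
   assert (c * Rabs (z m) <= 2 * Rabs r).
   { destruct (Req_dec (Rabs (z m)) 0) as [E|E]. rewrite E. lra.
     assert (0 < Rabs (z m)) by lra. apply Rmult_le_reg_r with (Rabs (z m)); auto. nra. }
   apply Rmult_le_reg_l with c; [lra|]. replace (c * (2 * Rabs r / c)) with (2 * Rabs r) by (field; lra). lra. }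
 assert (Hzk2 : z k ^ 2 <= (2 * Rabs r / c) ^ 2).
 { assert (0 <= Rabs (z m)) by apply Rabs_pos. assert (0 <= Rabs r) by apply Rabs_pos.
   assert (Ha : c/2 * S <= Rabs r * Rabs (z m)) by lra.
   assert (Hb : c/2 * S <= Rabs r * (2 * Rabs r / c)) by nra.
   assert (S <= (2 * Rabs r / c)^2). { apply Rmult_le_reg_l with (c/2). lra.
     eapply Rle_trans; [exact Hb|]. right. field. lra. }
   lra. }
 assert (0 <= 2 * Rabs r / c). { apply Rmult_le_pos; [|left; apply Rinv_0_lt_compat; auto]. pose proof (Rabs_pos r); lra. }
 fold (z k). rewrite sq_abs in Hzk2.
 assert (0 <= Rabs (z k)) by apply Rabs_pos. nra. Qed.

Lemma absprod_le e a b : Rabs (e * a * b) <= Rabs e * (a ^ 2 + b ^ 2) / 2.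
Proof. rewrite !Rabs_mult. rewrite (sq_abs a), (sq_abs b).
 assert (0 <= Rabs e) by apply Rabs_pos. assert (0 <= Rabs a) by apply Rabs_pos. assert (0 <= Rabs b) by apply Rabs_pos.
 assert (0 <= (Rabs a - Rabs b)^2) by apply pow2_ge_0. assert (Rabs a * Rabs b <= (Rabs a ^ 2 + Rabs b ^ 2)/2) by nra. replace (Rabs e * (Rabs a ^ 2 + Rabs b ^ 2) / 2) with (Rabs e * ((Rabs a ^ 2 + Rabs b ^ 2) / 2)) by (unfold Rdiv; ring). rewrite Rmult_assoc. apply Rmult_le_compat_l; auto. Qed.

Lemma wd2 A g n c :
  (forall x, QF A n x >= c * fsum n (fun i => x i ^ 2)) ->
  (forall i, fsum n (fun j => Rabs (A i j * (g i j - 1))) <= c/2) ->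
  (forall j, fsum n (fun i => Rabs (A i j * (g i j - 1))) <= c/2) ->
  forall x, QF (fun i j => A i j * g i j) n x >= c/2 * fsum n (fun i => x i ^2).
Proof. intros HA Hr Hc x. specialize (HA x).
 set (E := fun i j => A i j * (g i j - 1)).
 assert (HQ : QF (fun i j => A i j * g i j) n x = QF A n x + QF E n x).
 { unfold QF. rewrite <- fsum_plus. apply fsum_ext; intros i _. rewrite <- Rmult_plus_distr_r, <- fsum_plus. f_equal.
   apply fsum_ext; intros; unfold E; ring. }
 assert (HE : Rabs (QF E n x) <= c/2 * fsum n (fun i => x i ^ 2)).
 { unfold QF. eapply Rle_trans; [apply fsum_abs|].
   eapply Rle_trans. apply fsum_le. intros i _. rewrite <- fsum_scal_r. apply fsum_abs.
   eapply Rle_trans. apply fsum_le. intros i _. apply fsum_le. intros j _.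
   replace (E i j * x j * x i) with (E i j * x i * x j) by ring. apply absprod_le.
   rewrite (fsum_ext n _ (fun i => x i ^ 2 * (fsum n (fun j => Rabs (E i j))) / 2 + fsum n (fun j => Rabs (E i j) * x j ^ 2 / 2))).
   2:{ intros i _. unfold Rdiv. rewrite <- fsum_scal, <- !fsum_scal_r, <- fsum_plus. apply fsum_ext; intros; field. }
   rewrite fsum_plus. rewrite fsum_swap.
   assert (H1 : fsum n (fun i => x i ^ 2 * fsum n (fun j => Rabs (E i j)) / 2) <= c/4 * fsum n (fun i => x i ^ 2)).
   { rewrite <- fsum_scal. apply fsum_le. intros i _. assert (Hr' : fsum n (fun j => Rabs (E i j)) <= c/2) by exact (Hr i). assert (0 <= x i ^ 2) by nra.
     assert (x i ^ 2 * fsum n (fun j => Rabs (E i j)) <= x i ^ 2 * (c/2)) by (apply Rmult_le_compat_l; auto). unfold Rdiv in *. lra. }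
   assert (H2 : fsum n (fun j => fsum n (fun i => Rabs (E i j) * x j ^ 2 / 2)) <= c/4 * fsum n (fun i => x i ^ 2)).
   { rewrite <- fsum_scal. apply fsum_le. intros j _. unfold Rdiv. rewrite (fsum_ext n _ (fun i => Rabs (E i j) * (x j ^ 2 * / 2))) by (intros; ring). rewrite fsum_scal_r. assert (Hc' : fsum n (fun i => Rabs (E i j)) <= c/2) by exact (Hc j). assert (0 <= x j ^ 2) by nra.
     assert (fsum n (fun i => Rabs (E i j)) * (x j ^ 2 * / 2) <= (c/2) * (x j ^ 2 * / 2)) by (apply Rmult_le_compat_r; [apply Rmult_le_pos; lra|auto]). lra. }
   lra. }
 rewrite HQ.
 assert (- (c/2 * fsum n (fun i => x i ^ 2)) <= QF E n x) by (pose proof (Rle_abs (- QF E n x)); rewrite Rabs_Ropp in *; lra).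
 lra. Qed.

Lemma pivb A n c m r y :
  0 < c -> (m < n)%nat -> y m = 1 ->
  (forall x, QF A n x >= c * fsum n (fun i => x i ^ 2)) ->
  (forall i, (i < n)%nat -> fsum n (fun k => A i k * y k) = r * idm i m) ->
  r <= fsum n (fun k => A m k ^ 2) / c.
Proof. intros Hc Hm Hy HA Hs. specialize (HA y). unfold QF in HA.
 rewrite (fsum_ext n (fun i => fsum n (fun j => A i j * y j) * y i) (fun i => r * y i * dl i m)) in HA by (intros i Hi; rewrite Hs by auto; unfold idm, dl; ring).
 rewrite fsum_dl_r in HA. destruct (Nat.ltb_spec m n); [|lia]. rewrite Hy in HA.
 assert (Hr : r = fsum n (fun k => A m k * y k)) by (rewrite Hs by auto; unfold idm; rewrite Nat.eqb_refl; ring).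
 assert (Hle : fsum n (fun k => A m k * y k) <= fsum n (fun k => c/2 * y k ^ 2 + A m k ^ 2 / (2 * c))).
 { apply fsum_le. intros k _. assert (0 <= (c * y k - A m k) ^ 2) by apply pow2_ge_0.
   assert (E : c/2 * y k ^ 2 + A m k ^ 2 / (2 * c) - A m k * y k = (c * y k - A m k) ^ 2 / (2 * c)) by (field; lra).
   assert (0 <= (c * y k - A m k) ^ 2 / (2 * c)). { unfold Rdiv; apply Rmult_le_pos; [auto | left; apply Rinv_0_lt_compat; lra]. }
   lra. }
 rewrite fsum_plus, fsum_scal in Hle.
 rewrite (fsum_ext n (fun k => A m k ^ 2 / (2 * c)) (fun k => A m k ^ 2 * / (2 * c))) in Hle by auto.
 rewrite fsum_scal_r in Hle.
 set (N := fsum n (fun k => A m k ^ 2)) in *. set (S := fsum n (fun i => y i ^ 2)) in *.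
 assert (r <= r / 2 + N / (2 * c)) by (unfold Rdiv in *; nra).
 unfold Rdiv in *. rewrite Rinv_mult in *. nra. Qed.

Lemma exp_le_mono x y : x <= y -> exp x <= exp y.
Proof. intros H. destruct H. left; apply exp_increasing; auto. subst; lra. Qed.

Lemma exp_diff_abs u : Rabs (exp u - 1) <= exp (Rabs u) - 1.
Proof. destruct (Rle_or_lt 0 u) as [H|H].
 - rewrite (Rabs_pos_eq u H). assert (1 <= exp u) by (rewrite <- exp_0; apply exp_le_3 || (destruct H; [left; apply exp_increasing|right; subst]; auto)).
   rewrite Rabs_pos_eq; lra.
 - rewrite (Rabs_left u H). assert (exp u < 1) by (rewrite <- exp_0; apply exp_increasing; auto).
   pose proof (exp_pos u). rewrite Rabs_left by lra.
   assert (exp (- u) = / exp u) by apply exp_Ropp. rewrite H2.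
   assert (exp u * (/ exp u) = 1) by (field; lra).
   assert (0 <= (exp u - 1)^2) by apply pow2_ge_0.
   assert (exp u * (2 - exp u - / exp u) <= 0) by nra.
   assert (0 < / exp u) by (apply Rinv_0_lt_compat; auto). nra. Qed.

Lemma exp_lin_bound D a eps : 0 <= D -> 0 < a -> 0 < eps -> eps <= a / 4 ->
  exp (- a * D) * (exp (eps * D) - 1) <= eps * (4 / a) * exp (- (a / 2) * D).
Proof. intros HD Ha He Hea.
 assert (H1 : exp (eps * D) - 1 <= eps * D * exp (eps * D)).
 { pose proof (exp_ineq1_le (- (eps * D))). assert (exp (- (eps * D)) * exp (eps * D) = 1) by (rewrite <- exp_plus; replace (- (eps * D) + eps * D) with 0 by ring; apply exp_0).
   pose proof (exp_pos (eps * D)). nra. }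
 assert (H2 : D * exp (- (a / 4) * D) <= 4 / a).
 { pose proof (exp_ineq1_le ((a/4) * D)). assert (exp (- (a/4) * D) * exp ((a/4) * D) = 1) by (rewrite <- exp_plus; replace (- (a/4) * D + (a/4) * D) with 0 by ring; apply exp_0).
   pose proof (exp_pos (- (a/4) * D)). pose proof (exp_pos ((a/4) * D)).
   assert (Hm : exp (- (a/4) * D) * (1 + a/4 * D) <= 1).
   { rewrite <- H0. apply Rmult_le_compat_l; lra. }
   assert (a/4 * D * exp (- (a / 4) * D) <= 1).
   { replace (a/4 * D * exp (- (a / 4) * D)) with (exp (- (a/4) * D) * (1 + a/4 * D) - exp (- (a/4) * D)) by ring. lra. }
   apply Rmult_le_reg_l with (a/4). lra. replace (a/4 * (4/a)) with 1 by (field; lra). lra. }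
 assert (H3 : exp (- a * D) * exp (eps * D) <= exp (- (a / 4) * D) * exp (- (a / 2) * D)).
 { rewrite <- !exp_plus. apply exp_le_mono. nra. }
 pose proof (exp_pos (- a * D)). pose proof (exp_pos (- (a/2) * D)).
 apply Rle_trans with (exp (- a * D) * (eps * D * exp (eps * D))). apply Rmult_le_compat_l; lra.
 replace (exp (- a * D) * (eps * D * exp (eps * D))) with (eps * D * (exp (- a * D) * exp (eps * D))) by ring.
 apply Rle_trans with (eps * D * (exp (- (a / 4) * D) * exp (- (a / 2) * D))). apply Rmult_le_compat_l; nra.
 replace (eps * D * (exp (- (a / 4) * D) * exp (- (a / 2) * D))) with (eps * (D * exp (- (a / 4) * D)) * exp (- (a / 2) * D)) by ring.
 apply Rmult_le_compat_r; [lra|]. apply Rmult_le_compat_l; lra. Qed.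

Lemma metric_diff d i j m : is_metric d -> Rabs (d i m - d j m) <= d i j.
Proof. intros [H0 [H1 [H2 H3]]]. pose proof (H3 i j m). pose proof (H3 j i m). rewrite (H2 j i) in *.
 apply Rabs_le. lra. Qed.

Lemma pert_bound d A C g' eps i j m : is_metric d -> 0 < C -> 0 < g' -> 0 < eps -> eps <= g'/4 ->
  Rabs (A i j) <= C * exp (- g' * d i j) ->
  Rabs (A i j * (exp (eps * (d i m - d j m)) - 1)) <= C * (eps * (4 / g')) * exp (- (g'/2) * d i j).
Proof. intros Hd HC Hg He Heg HA. rewrite Rabs_mult.
 assert (E1 : Rabs (exp (eps * (d i m - d j m)) - 1) <= exp (eps * d i j) - 1).
 { eapply Rle_trans. apply exp_diff_abs. assert (exp (Rabs (eps * (d i m - d j m))) <= exp (eps * d i j)).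
   { apply exp_le_mono. rewrite Rabs_mult, Rabs_pos_eq by lra. apply Rmult_le_compat_l. lra. apply metric_diff; auto. } lra. }
 assert (Hdij : 0 <= d i j) by (destruct Hd; auto).
 pose proof (exp_lin_bound (d i j) g' eps Hdij Hg He Heg).
 pose proof (Rabs_pos (A i j)). pose proof (Rabs_pos (exp (eps * (d i m - d j m)) - 1)).
 apply Rle_trans with (C * exp (- g' * d i j) * (exp (eps * d i j) - 1)).
 apply Rmult_le_compat; auto. rewrite Rmult_assoc. rewrite (Rmult_assoc C (eps * (4/g'))). apply Rmult_le_compat_l; lra. Qed.

Lemma decay_sys d A n m r y c C g' K eps :
  is_metric d -> 0 < c -> 0 < C -> 0 < g' -> 0 < K ->
  (forall i, ex_series (fun j => exp (- (g'/2) * d i j)) /\ Series (fun j => exp (- (g'/2) * d i j)) <= K) ->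
  (forall i j, Rabs (A i j) <= C * exp (- g' * d i j)) ->
  0 < eps -> eps <= g' / 4 -> eps <= c * g' / (8 * C * K) ->
  (forall x, QF A n x >= c * fsum n (fun i => x i ^ 2)) -> (m < n)%nat ->
  (forall i, (i < n)%nat -> fsum n (fun k => A i k * y k) = r * idm i m) ->
  forall k, (k < n)%nat -> Rabs (y k) <= 2 * Rabs r / c * exp (- eps * d k m).
Proof. intros Hd Hc HC Hg HK HS HA He Heg Hec HE Hm Hsys k Hk.
 assert (Hsym : forall i j, d i j = d j i) by (destruct Hd as [_ [_ [H _]]]; auto).
 assert (Hmm : d m m = 0) by (destruct Hd as [_ [H _]]; apply H; auto).
 assert (Hcst : C * (eps * (4 / g')) * K <= c / 2).
 { apply Rmult_le_compat_l with (r := 8 * C * K / g') in Hec; [|apply Rmult_le_pos; [nra|left; apply Rinv_0_lt_compat; lra]].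
   replace (8 * C * K / g' * (c * g' / (8 * C * K))) with c in Hec by (field; repeat split; lra).
   replace (C * (eps * (4 / g')) * K) with (8 * C * K / g' * eps / 2) by (field; lra). lra. }
 assert (Hrow : forall i, fsum n (fun j => exp (- (g'/2) * d i j)) <= K).
 { intros i. destruct (HS i) as [Hex HK']. eapply Rle_trans; [|exact HK']. apply fsum_le_Series; auto. intros; left; apply exp_pos. }
 assert (HW := wd2 A (fun i j => exp (eps * (d i m - d j m))) n c HE).
 assert (Hpt := fun i j => pert_bound d A C g' eps i j m Hd HC Hg He Heg (HA i j)).
 assert (HW' : forall x, QF (fun i j => A i j * exp (eps * (d i m - d j m))) n x >= c/2 * fsum n (fun i => x i ^2)).
 { apply HW.
   - intros i. eapply Rle_trans. apply fsum_le. intros j _. apply Hpt. rewrite fsum_scal.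
     eapply Rle_trans; [|exact Hcst]. apply Rmult_le_compat_l. pose proof (Rinv_0_lt_compat g' Hg). unfold Rdiv; repeat apply Rmult_le_pos; lra. apply Hrow.
   - intros j. eapply Rle_trans. apply fsum_le. intros i _. apply Hpt. rewrite fsum_scal.
     eapply Rle_trans; [|exact Hcst]. apply Rmult_le_compat_l. pose proof (Rinv_0_lt_compat g' Hg). unfold Rdiv; repeat apply Rmult_le_pos; lra.
     rewrite (fsum_ext n _ (fun i => exp (- (g'/2) * d j i))) by (intros; rewrite Hsym; auto). apply Hrow. }
 assert (H1 := wd1 A n c (fun i => d i m) eps m r y Hc Hm Hmm HW' Hsys k Hk). cbv beta in H1.
 rewrite Rabs_mult, (Rabs_pos_eq (exp _)) in H1 by (left; apply exp_pos).
 assert (exp (- eps * d k m) * exp (eps * d k m) = 1) by (rewrite <- exp_plus; replace (- eps * d k m + eps * d k m) with 0 by ring; apply exp_0).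
 pose proof (exp_pos (- eps * d k m)).
 replace (Rabs (y k)) with (exp (- eps * d k m) * (exp (eps * d k m) * Rabs (y k))) by (rewrite <- Rmult_assoc, H; ring).
 rewrite Rmult_comm. apply Rmult_le_compat_r; lra. Qed.

Lemma prod_decay d P Q n i j B1 B2 a K : is_metric d -> 0 < a -> 0 <= B1 -> 0 <= B2 ->
  (forall k, Rabs (P i k) <= B1 * exp (- a * d i k)) -> (forall k, Rabs (Q k j) <= B2 * exp (- a * d k j)) ->
  ex_series (fun k => exp (- (a/2) * d i k)) -> Series (fun k => exp (- (a/2) * d i k)) <= K ->
  Rabs (fsum n (fun k => P i k * Q k j)) <= B1 * B2 * K * exp (- (a/2) * d i j).
Proof. intros Hd Ha HB1 HB2 HP HQ Hex HK.
 destruct Hd as [Hd0 [_ [_ Htr]]].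
 eapply Rle_trans. apply fsum_abs.
 eapply Rle_trans. apply fsum_le. intros k _. 
 instantiate (1 := fun k => B1 * B2 * exp (- (a/2) * d i j) * exp (- (a/2) * d i k)).
 rewrite Rabs_mult. cbv beta.
 apply Rle_trans with (B1 * exp (- a * d i k) * (B2 * exp (- a * d k j))).
 apply Rmult_le_compat; auto using Rabs_pos.
 replace (B1 * exp (- a * d i k) * (B2 * exp (- a * d k j))) with (B1 * B2 * (exp (- a * d i k) * exp (- a * d k j))) by ring.
 rewrite (Rmult_assoc (B1 * B2) (exp _) (exp _)). apply Rmult_le_compat_l. nra. rewrite <- !exp_plus. apply exp_le_mono.
 pose proof (Htr i k j). pose proof (Hd0 k j). pose proof (Hd0 i k). nra.
 rewrite fsum_scal. pose proof (exp_pos (- (a / 2) * d i j)).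
 replace (B1 * B2 * K * exp (- (a / 2) * d i j)) with (B1 * B2 * exp (- (a / 2) * d i j) * K) by ring.
 apply Rmult_le_compat_l. apply Rmult_le_pos; [nra|lra].
 eapply Rle_trans; [|exact HK]. apply fsum_le_Series; auto. intros; left; apply exp_pos. Qed.

Lemma ex_series_le_R (a b : nat -> R) : (forall n, Rabs (a n) <= b n) -> ex_series b -> ex_series a.
Proof. intros H Hb. apply (ex_series_le a b); auto. Qed.

Lemma ex_series_scal_R c (a : nat -> R) : ex_series a -> ex_series (fun n => c * a n).
Proof. intros H. apply (ex_series_scal_l c a H). Qed.

Lemma ex_series_plus_R (a b : nat -> R) : ex_series a -> ex_series b -> ex_series (fun n => a n + b n).
Proof. intros H1 H2. apply (ex_series_plus a b H1 H2). Qed.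

Lemma Series_fsum N (f : nat -> nat -> R) : (forall i, ex_series (f i)) ->
  ex_series (fun j => fsum N (fun i => f i j)) /\ Series (fun j => fsum N (fun i => f i j)) = fsum N (fun i => Series (f i)).
Proof. intros H. induction N; simpl.
 - split. apply (ex_series_fin 0); auto. apply (Series_fin 0); auto.
 - destruct IHN as [E1 E2]. split. apply ex_series_plus_R; auto.
   rewrite Series_plus; auto. rewrite E2; auto. Qed.

Lemma schur_bounded d X B δ K : is_metric d -> 0 < δ -> 0 <= B ->
  (forall i j, Rabs (X i j) <= B * exp (- δ * d i j)) ->
  (forall i, ex_series (fun j => exp (- δ * d i j)) /\ Series (fun j => exp (- δ * d i j)) <= K) ->
  bounded_l2 (absm X).
Proof. intros Hd Hδ HB HX HS.
 assert (Hsym : forall i j, d i j = d j i) by (destruct Hd as [_ [_ [H _]]]; auto).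
 assert (Hd0 : forall i j, 0 <= d i j) by (destruct Hd; auto).
 assert (HK0 : 0 <= K). { destruct (HS 0%nat) as [E F]. eapply Rle_trans; [|exact F]. apply Series_nonneg; auto. intros; left; apply exp_pos. }
 assert (Hle1 : forall i j, exp (- δ * d i j) <= 1). { intros. rewrite <- exp_0. apply exp_le_mono. specialize (Hd0 i j). nra. }
 set (a := fun i j => B * exp (- δ * d i j)).
 assert (Ha0 : forall i j, 0 <= a i j). { intros; unfold a. pose proof (exp_pos (- δ * d i j)). nra. }
 assert (HaB : forall i j, a i j <= B). { intros; unfold a. specialize (Hle1 i j). nra. }
 exists ((B * K + 1) * (B * K)). intros x Hx. unfold in_l2 in Hx.
 assert (Hx0 : forall j, 0 <= x j ^ 2) by (intros; apply pow2_ge_0).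
 assert (F1 : forall i, ex_series (fun j => a i j * Rabs (x j))).
 { intros i. apply ex_series_le_R with (b := fun j => /2 * a i j + /2 * (B * x j ^ 2)).
   - intros j. rewrite Rabs_pos_eq by (apply Rmult_le_pos; auto using Rabs_pos).
     assert (0 <= (Rabs (x j) - 1)^2) by apply pow2_ge_0. rewrite (sq_abs (x j)).
     specialize (Ha0 i j). specialize (HaB i j). pose proof (Rabs_pos (x j)).
     assert (a i j * (Rabs (x j) - 1)^2 >= 0) by nra.
     assert (a i j * Rabs (x j) ^ 2 <= B * Rabs (x j) ^ 2) by (apply Rmult_le_compat_r; auto; apply pow2_ge_0). nra.
   - apply ex_series_plus_R; apply ex_series_scal_R. unfold a. apply ex_series_scal_R. apply HS.
     apply ex_series_scal_R. auto. }
 assert (F2 : forall i, ex_series (fun j => absm X i j * x j)).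
 { intros i. apply ex_series_le_R with (b := fun j => a i j * Rabs (x j)); auto.
   intros j. unfold absm. rewrite Rabs_mult, Rabs_Rabsolu. apply Rmult_le_compat_r; auto using Rabs_pos. }
 assert (F3 : forall i, ex_series (fun j => a i j * x j ^ 2)).
 { intros i. apply ex_series_le_R with (b := fun j => B * x j ^ 2). intros j. rewrite Rabs_pos_eq by (apply Rmult_le_pos; auto).
   apply Rmult_le_compat_r; auto. apply ex_series_scal_R; auto. }
 set (Q := fun i => Series (fun j => a i j * x j ^ 2)).
 set (S := fun i => Series (fun j => a i j * Rabs (x j))).
 assert (HQ0 : forall i, 0 <= Q i). { intros; apply Series_nonneg; auto. intros; apply Rmult_le_pos; auto. }
 assert (HS0 : forall i, 0 <= S i). { intros; apply Series_nonneg; auto. intros; apply Rmult_le_pos; auto using Rabs_pos. }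
 assert (F4 : forall i, Rabs (mat_app (absm X) x i) <= S i).
 { intros i. unfold mat_app. eapply Rle_trans. apply Series_Rabs.
   apply ex_series_le_R with (b := fun j => a i j * Rabs (x j)); auto.
   intros j. rewrite Rabs_Rabsolu. unfold absm. rewrite Rabs_mult, Rabs_Rabsolu. apply Rmult_le_compat_r; auto using Rabs_pos.
   apply Series_le; auto. intros j. split. apply Rabs_pos. unfold absm. rewrite Rabs_mult, Rabs_Rabsolu. apply Rmult_le_compat_r; auto using Rabs_pos. }
 set (A' := B * K + 1).
 assert (HA' : 0 < A') by (unfold A'; nra).
 assert (HsumA : forall i, Series (fun j => a i j) <= B * K).
 { intros i. unfold a. rewrite Series_scal_l. apply Rmult_le_compat_l; auto. apply HS. }
 assert (F5 : forall i, S i ^ 2 <= A' * Q i).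
 { intros i. destruct (Req_dec (S i) 0) as [E|E]. rewrite E. specialize (HQ0 i). nra.
   assert (HSp : 0 < S i) by (specialize (HS0 i); lra). set (t := S i / A').
   assert (Ht : 0 < t) by (unfold t; apply Rdiv_lt_0_compat; auto).
   assert (Hpt : forall j, 0 <= 2 * (a i j * Rabs (x j)) <= t * a i j + / t * (a i j * x j ^ 2)).
   { intros j. split. apply Rmult_le_pos; [lra|]. apply Rmult_le_pos; auto using Rabs_pos.
     assert (E2 : t * a i j + / t * (a i j * x j ^ 2) - 2 * (a i j * Rabs (x j)) = a i j * (t - Rabs (x j))^2 / t).
     { rewrite (sq_abs (x j)). field. lra. }
     assert (0 <= a i j * (t - Rabs (x j))^2 / t). { apply Rdiv_le_0_compat; auto. apply Rmult_le_pos; auto; apply pow2_ge_0. }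
     lra. }
   assert (Hser := Series_le _ _ Hpt).
   rewrite Series_scal_l in Hser. rewrite Series_plus in Hser by (apply ex_series_scal_R; auto; unfold a; apply ex_series_scal_R; apply HS).
   rewrite !Series_scal_l in Hser. fold (S i) in Hser. fold (Q i) in Hser.
   assert (Hser' : 2 * S i <= t * A' + / t * Q i).
   { eapply Rle_trans. apply Hser. apply ex_series_plus_R; apply ex_series_scal_R; auto. unfold a; apply ex_series_scal_R; apply HS.
     assert (t * Series (fun j => a i j) <= t * A'). { apply Rmult_le_compat_l; [lra|]. specialize (HsumA i). unfold A'. lra. } change (Series (a i)) with (Series (fun j => a i j)). lra. }
   unfold t in Hser'. replace (S i / A' * A') with (S i) in Hser' by (field; lra).
   rewrite Rinv_div in Hser'.
   assert (S i <= A' / S i * Q i) by lra.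
   apply Rmult_le_compat_l with (r := S i) in H; [|lra].
   replace (S i * (A' / S i * Q i)) with (A' * Q i) in H by (field; lra). nra. }
 assert (F6 : forall N, fsum N Q <= B * K * l2norm2 x).
 { intros N. destruct (Series_fsum N (fun i j => a i j * x j ^ 2) F3) as [E1 E2]. unfold Q. rewrite <- E2.
   unfold l2norm2. rewrite <- Series_scal_l. apply Series_le. 2: apply ex_series_scal_R; auto.
   intros j. split. apply fsum_nonneg; intros; apply Rmult_le_pos; auto.
   unfold a. rewrite (fsum_ext N _ (fun i => exp (- δ * d j i) * (B * x j ^ 2))) by (intros; rewrite Hsym; ring).
   rewrite fsum_scal_r. replace (B * K * x j ^ 2) with (K * (B * x j ^ 2)) by ring. apply Rmult_le_compat_r. apply Rmult_le_pos; auto.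
   destruct (HS j) as [E F]. eapply Rle_trans; [|exact F]. apply fsum_le_Series; auto. intros; left; apply exp_pos. }
 destruct (bounded_series Q (B * K * l2norm2 x) HQ0 F6) as [EQ SQ].
 assert (F7 : forall i, Rabs (mat_app (absm X) x i ^ 2) <= A' * Q i).
 { intros i. rewrite Rabs_pos_eq by apply pow2_ge_0. rewrite sq_abs. specialize (F4 i). specialize (F5 i).
   pose proof (Rabs_pos (mat_app (absm X) x i)). nra. }
 assert (EQ' : ex_series (fun i => A' * Q i)) by (apply ex_series_scal_R; auto).
 split; [|split]; auto.
 - apply ex_series_le_R with (b := fun i => A' * Q i); auto.
 - unfold l2norm2 at 1. eapply Rle_trans. apply (Series_le _ (fun i => A' * Q i)); auto. intros i. split. apply pow2_ge_0. specialize (F7 i). rewrite Rabs_pos_eq in F7 by apply pow2_ge_0. exact F7.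
   rewrite Series_scal_l. apply Rle_trans with (A' * (B * K * l2norm2 x)); [apply Rmult_le_compat_l; lra | right; unfold A'; ring]. Qed.

Lemma MUinv_id M L U Uinv : lower_tri L -> upper_tri U -> (forall i j, M i j = matmul L U i j) ->
  upper_tri Uinv -> (forall i j, matmul U Uinv i j = idm i j) ->
  forall i j, fsum (S j) (fun k => M i k * Uinv k j) = L i j.
Proof. intros HL HU HM HUi E i j.
 rewrite (fsum_ext (S j) _ (fun k => fsum (S i) (fun l => L i l * (U l k * Uinv k j)))).
 2:{ intros k _. rewrite HM. rewrite (matmul_fin _ _ _ _ (S i)). rewrite <- fsum_scal_r. apply fsum_ext; intros; ring.
     intros l Hl. rewrite HL by lia. ring. }
 rewrite fsum_swap.
 rewrite (fsum_ext (S i) _ (fun l => L i l * dl l j)).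
 2:{ intros l _. rewrite fsum_scal. f_equal. change (dl l j) with (idm l j). rewrite <- (E l j). rewrite (matmul_fin _ _ _ _ (S j)); auto.
     intros k Hk. rewrite HUi by lia. ring. }
 rewrite fsum_dl_r. destruct (Nat.ltb_spec j (S i)); auto. rewrite HL by lia. auto. Qed.

Lemma LinvM_id M L U Linv : lower_tri L -> upper_tri U -> (forall i j, M i j = matmul L U i j) ->
  lower_tri Linv -> (forall i j, matmul Linv L i j = idm i j) ->
  forall i j, fsum (S i) (fun k => Linv i k * M k j) = U i j.
Proof. intros HL HU HM HLi E i j.
 rewrite (fsum_ext (S i) _ (fun k => fsum (S j) (fun l => Linv i k * L k l * U l j))).
 2:{ intros k _. rewrite HM. rewrite (matmul_fin _ _ _ _ (S j)). rewrite <- fsum_scal. apply fsum_ext; intros; ring.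
     intros l Hl. rewrite HU by lia. ring. }
 rewrite fsum_swap.
 rewrite (fsum_ext (S j) _ (fun l => dl i l * U l j)).
 2:{ intros l _. rewrite fsum_scal_r. f_equal. change (dl i l) with (idm i l). rewrite <- (E i l). rewrite (matmul_fin _ _ _ _ (S i)); auto.
     intros k Hk. rewrite HLi by lia. ring. }
 rewrite fsum_dl_l. destruct (Nat.ltb_spec i (S j)); auto. rewrite HU by lia. auto. Qed.

Lemma ell_fin M c : elliptic M c -> forall n x, QF M n x >= c * fsum n (fun i => x i ^ 2).
Proof. intros H n x. set (x' := fun l => if Nat.ltb l n then x l else 0).
 assert (Hz : forall l, (n <= l)%nat -> x' l = 0). { intros l Hl. unfold x'. destruct (Nat.ltb_spec l n); [lia|auto]. }
 assert (Hin : forall l, (l < n)%nat -> x' l = x l). { intros l Hl. unfold x'. destruct (Nat.ltb_spec l n); [auto|lia]. }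
 assert (Hl2 : in_l2 x'). { apply (ex_series_fin n). intros; rewrite Hz; auto; ring. }
 specialize (H x' Hl2).
 assert (Hm : forall i, mat_app M x' i = fsum n (fun j => M i j * x j)).
 { intros i. unfold mat_app. rewrite (Series_fin n). apply fsum_ext; intros; rewrite Hin; auto. intros; rewrite Hz; auto; ring. }
 rewrite (Series_fin n) in H. 2:{ intros; rewrite Hz; auto; ring. }
 unfold l2norm2 in H. rewrite (Series_fin n) in H. 2:{ intros; rewrite Hz; auto; ring. }
 rewrite (fsum_ext n _ (fun i => fsum n (fun j => M i j * x j) * x i)) in H by (intros; rewrite Hm, Hin; auto).
 rewrite (fsum_ext n (fun k => x' k ^ 2) (fun i => x i ^ 2)) in H by (intros; rewrite Hin; auto).
 exact H. Qed.

Lemma QF_trans M n x : QF (trans M) n x = QF M n x.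
Proof. unfold QF, trans.
 rewrite (fsum_ext n _ (fun i => fsum n (fun j => M j i * x j * x i))) by (intros; rewrite fsum_scal_r; auto).
 rewrite fsum_swap. apply fsum_ext. intros j _. rewrite <- fsum_scal_r. apply fsum_ext; intros; ring. Qed.

Theorem theorem3p11 (d : nat -> nat -> R) (gamma : R) (M : mat)
  (Hd : is_metric d) (Hsum : summable_metric d) (Hgamma : 0 < gamma)
  (HJ : jaffard d gamma M)
  (Hell : exists Cell, 0 < Cell /\ elliptic M Cell) :
  exists L U Linv Uinv : mat,
    lower_tri L /\ upper_tri U /\
    (forall i j, M i j = matmul L U i j) /\
    lower_tri Linv /\ is_inverse L Linv /\
    upper_tri Uinv /\ is_inverse U Uinv /\
    bounded_l2 (absm L) /\ bounded_l2 (absm U) /\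
    bounded_l2 (absm Linv) /\ bounded_l2 (absm Uinv).
Proof.
 destruct Hell as [c [Hc Hel]].
 assert (HE := ell_fin M c Hel).
 assert (HE0 : EllS M 0 c) by (intros n x _; apply HE).
 assert (HEt : forall n x, QF (trans M) n x >= c * fsum n (fun i => x i ^ 2)) by (intros; rewrite QF_trans; apply HE).
 assert (Hsym : forall i j, d i j = d j i) by (destruct Hd as [_ [_ [H _]]]; auto).
 assert (Hd0 : forall i j, 0 <= d i j) by (destruct Hd; auto).
 set (L := Lmat M). set (U := Umat M).
 assert (HL := LU_lower M). assert (HU := LU_upper M). fold L U in HL, HU.
 assert (Hpiv : forall i, U i i >= c). { intros i. unfold U. rewrite Umat_diag. apply pivot_ge. apply sch_ell; auto. }
 assert (HLU : forall i j, M i j = matmul L U i j) by (apply LU_correct with c; auto).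
 assert (HLd : forall i, L i i <> 0) by (intros; unfold L; rewrite Lmat_diag; lra).
 assert (HUd : forall i, U i i <> 0) by (intros i; specialize (Hpiv i); lra).
 destruct (lower_inverse L HL HLd) as [HLi [[HL1 HL2] HLid]].
 destruct (upper_inverse U HU HUd) as [HUi [HU1 HU2]].
 set (Linv := rinv L) in *. set (Uinv := trans (rinv (trans U))) in *.
 exists L, U, Linv, Uinv.
 do 7 (split; [first [assumption | split; assumption] |]).
 set (g' := gamma / 2). assert (Hg' : 0 < g') by (unfold g'; lra).
 destruct (HJ g' ltac:(unfold g'; lra)) as [C [HC HMC]].
 destruct (Hsum (g'/2) ltac:(lra)) as [K1 HK1].
 set (K1' := Rmax 1 K1). assert (HK1' : 0 < K1') by (unfold K1'; pose proof (Rmax_l 1 K1); lra).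
 assert (HS1 : forall i, ex_series (fun j => exp (- (g'/2) * d i j)) /\ Series (fun j => exp (- (g'/2) * d i j)) <= K1').
 { intros i. destruct (HK1 i) as [E F]. split; auto. replace (- (g'/2)) with (- (g'/2)) by ring. eapply Rle_trans; [exact F|]. apply Rmax_r. }
 set (eps := Rmin (g'/4) (c * g' / (8 * C * K1'))).
 assert (Heps : 0 < eps). { unfold eps. apply Rmin_pos. lra. apply Rdiv_lt_0_compat; [nra|]. repeat apply Rmult_lt_0_compat; lra. }
 assert (Heps1 : eps <= g'/4) by apply Rmin_l.
 assert (Heps2 : eps <= c * g' / (8 * C * K1')) by apply Rmin_r.
 assert (HMt : forall i j, Rabs (trans M i j) <= C * exp (- g' * d i j)). { intros; unfold trans; rewrite Hsym; auto. }
 assert (DUi : forall k j, Rabs (Uinv k j) <= 2 / c * exp (- eps * d k j)).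
 { intros k j. destruct (Compare_dec.le_lt_dec k j) as [Hkj|Hkj].
   - assert (H := decay_sys d M (S j) j 1 (fun k => Uinv k j) c C g' K1' eps Hd Hc HC Hg' HK1' HS1 HMC Heps Heps1 Heps2 (HE (S j))
       ltac:(lia)).
     rewrite Rabs_R1, Rmult_1_r in H. apply H; [|lia].
     intros i Hi. rewrite (MUinv_id M L U Uinv HL HU HLU HUi HU1). unfold idm.
     destruct (Nat.eqb_spec i j). subst. unfold L; rewrite Lmat_diag; ring. rewrite HL by lia. ring.
   - rewrite HUi by lia. rewrite Rabs_R0. pose proof (exp_pos (- eps * d k j)).
     apply Rmult_le_pos; [apply Rdiv_le_0_compat|]; lra. }
 set (BL := 2 * (C * C * K1' / c) / c).
 assert (DLi : forall i k, Rabs (Linv i k) <= BL * exp (- eps * d i k)).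
 { intros i k. destruct (Compare_dec.le_lt_dec k i) as [Hki|Hki].
   - assert (Hsys : forall j, (j < S i)%nat -> fsum (S i) (fun k => trans M j k * Linv i k) = U i i * idm j i).
     { intros j Hj. unfold trans. rewrite (fsum_ext _ _ (fun k => Linv i k * M k j)) by (intros; ring).
       rewrite (LinvM_id M L U Linv HL HU HLU HLi HL2). unfold idm. destruct (Nat.eqb_spec j i). subst; ring. rewrite HU by lia. ring. }
     assert (H := decay_sys d (trans M) (S i) i (U i i) (fun k => Linv i k) c C g' K1' eps Hd Hc HC Hg' HK1' HS1 HMt Heps Heps1 Heps2 (HEt (S i))
       ltac:(lia) Hsys k ltac:(lia)). cbv beta in H.
     assert (Hy : Linv i i = 1) by (rewrite HLid; unfold L; rewrite Lmat_diag; apply Rinv_1).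
     assert (Hpb := pivb (trans M) (S i) c i (U i i) (fun k => Linv i k) Hc ltac:(lia) Hy (HEt (S i)) Hsys).
     assert (HN : fsum (S i) (fun k => trans M i k ^ 2) <= C * C * K1').
     { eapply Rle_trans. apply fsum_le. intros l _. instantiate (1 := fun l => C * C * exp (- (g'/2) * d i l)). cbv beta.
       unfold trans. rewrite sq_abs. specialize (HMC l i). pose proof (Rabs_pos (M l i)).
       assert (Rabs (M l i) ^ 2 <= (C * exp (- g' * d l i)) ^ 2) by (apply pow_incr; auto).
       eapply Rle_trans; [exact H1|]. rewrite Hsym. replace ((C * exp (- g' * d i l)) ^ 2) with (C * C * (exp (- g' * d i l) * exp (- g' * d i l))) by ring.
       apply Rmult_le_compat_l. nra. rewrite <- exp_plus. apply exp_le_mono. specialize (Hd0 i l). nra.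
       rewrite fsum_scal. apply Rmult_le_compat_l. nra. destruct (HS1 i) as [E F]. eapply Rle_trans; [|exact F].
       apply fsum_le_Series; auto. intros; left; apply exp_pos. }
     assert (Hr : Rabs (U i i) <= C * C * K1' / c).
     { specialize (Hpiv i). rewrite Rabs_pos_eq by lra. eapply Rle_trans; [exact Hpb|]. unfold Rdiv. apply Rmult_le_compat_r; auto.
       left; apply Rinv_0_lt_compat; auto. }
     eapply Rle_trans; [exact H|]. rewrite Hsym. apply Rmult_le_compat_r. left; apply exp_pos.
     unfold BL. unfold Rdiv. apply Rmult_le_compat_r. left; apply Rinv_0_lt_compat; auto. lra.
   - rewrite HLi by lia. rewrite Rabs_R0. pose proof (exp_pos (- eps * d i k)).
     assert (0 <= BL). { unfold BL. apply Rdiv_le_0_compat; [|lra]. apply Rmult_le_pos; [lra|]. apply Rdiv_le_0_compat; [|lra].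
       apply Rmult_le_pos; [nra|lra]. } nra. }
 assert (HBL : 0 <= BL). { unfold BL. apply Rdiv_le_0_compat; [|lra]. apply Rmult_le_pos; [lra|]. apply Rdiv_le_0_compat; [|lra].
       apply Rmult_le_pos; [nra|lra]. }
 assert (HMe : forall i j, Rabs (M i j) <= C * exp (- eps * d i j)).
 { intros. eapply Rle_trans; [apply HMC|]. apply Rmult_le_compat_l; [lra|]. apply exp_le_mono. specialize (Hd0 i j). nra. }
 destruct (Hsum (eps/2) ltac:(lra)) as [K2 HK2].
 destruct (Hsum eps Heps) as [K3 HK3].
 assert (HK2' : forall i, ex_series (fun j => exp (- (eps/2) * d i j)) /\ Series (fun j => exp (- (eps/2) * d i j)) <= K2).
 { intros i; destruct (HK2 i); split; auto. }
 assert (HK3' : forall i, ex_series (fun j => exp (- eps * d i j)) /\ Series (fun j => exp (- eps * d i j)) <= K3).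
 { intros i; destruct (HK3 i); split; auto. }
 split; [|split; [|split]].
 -
   apply (schur_bounded d L (C * (2 / c) * K2) (eps/2) K2 Hd ltac:(lra)).
   { apply Rmult_le_pos. apply Rmult_le_pos. lra. apply Rdiv_le_0_compat; lra.
     destruct (HK2' 0%nat) as [E F]. eapply Rle_trans; [|exact F]. apply Series_nonneg; auto. intros; left; apply exp_pos. }
   intros i j. rewrite <- (MUinv_id M L U Uinv HL HU HLU HUi HU1).
   destruct (HK2' i) as [E F].
   apply (prod_decay d M Uinv (S j) i j C (2/c) eps K2 Hd Heps ltac:(lra) ltac:(apply Rdiv_le_0_compat; lra)); auto.
   auto. auto.
 -
   apply (schur_bounded d U (BL * C * K2) (eps/2) K2 Hd ltac:(lra)).
   { apply Rmult_le_pos. nra.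
     destruct (HK2' 0%nat) as [E F]. eapply Rle_trans; [|exact F]. apply Series_nonneg; auto. intros; left; apply exp_pos. }
   intros i j. rewrite <- (LinvM_id M L U Linv HL HU HLU HLi HL2).
   destruct (HK2' i) as [E F].
   apply (prod_decay d Linv M (S i) i j BL C eps K2 Hd Heps HBL ltac:(lra)); auto. exact HK2'.
 - exact (schur_bounded d Linv BL eps K3 Hd Heps HBL DLi HK3').
 - exact (schur_bounded d Uinv (2/c) eps K3 Hd Heps ltac:(apply Rdiv_le_0_compat; lra) DUi HK3').
Qed.
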